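(* Let $(X,w)$ be a weighted set and let $f:(X,w)\to(F(X,w),\|\cdot\|)$ be the universal $\mathsf{WSet}$-morphism into the free bounded archimedean $\ell$-algebra $F(X,w)$ on $(X,w)$. Then $\|f(x)\|=w(x)$ for every $x\in X$.
   Context: An $\ell$-algebra is a commutative unital $\mathbb{R}$-algebra with a lattice order compatible with addition, with products and nonnegative scalar multiples of nonnegative elements nonnegative. It is bounded if each $a\le n\cdot1$ for some $n\in\mathbb{N}$, archimedean if $n\cdot a\le b$ for all $n$ implies $a\le0$. $\mathbf{bal}$ is the category of bounded archimedean $\ell$-algebras and unital $\ell$-algebra homomorphisms; $\|a\|=\inf\{r\mid a\vee(-a)\le r\cdot1\}$. A weighted set is $(X,w)$ with $w:X\to[0,\infty)$; $\mathsf{WSet}$-morphisms $(X_1,w_1)\to(X_2,w_2)$ are functions with $w_2(f(x))\le w_1(x)$. The free object $F(X,w)$ with $f:(X,w)\to(F(X,w),\|\cdot\|)$ is characterized by: $F(X,w)\in\mathbf{bal}$, $f$ is a $\mathsf{WSet}$-morphism, and for every $A\in\mathbf{bal}$ and $\mathsf{WSet}$-morphism $h:(X,w)\to(A,\|\cdot\|)$ there is a unique $\mathbf{bal}$-morphism $\bar\alpha:F(X,w)\to A$ with $\bar\alpha\circ f=h$ (such a free object exists). *)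

(* Defs.v *)
From Stdlib Require Import Reals.
From Coquelicot Require Import Coquelicot.
Open Scope R_scope.

Record lalg := LAlg {
  car :> Type;
  zero : car; one : car;
  add : car -> car -> car; opp : car -> car; mul : car -> car -> car;
  scal : R -> car -> car;
  le : car -> car -> Prop;
  join : car -> car -> car; meet : car -> car -> car;
  addA : forall a b c, add a (add b c) = add (add a b) c;
  addC : forall a b, add a b = add b a;
  add0 : forall a, add zero a = a;
  addN : forall a, add (opp a) a = zero;
  mulA : forall a b c, mul a (mul b c) = mul (mul a b) c;
  mulC : forall a b, mul a b = mul b a;
  mul1 : forall a, mul one a = a;
  mulDl : forall a b c, mul (add a b) c = add (mul a c) (mul b c);
  scalDr : forall r a b, scal r (add a b) = add (scal r a) (scal r b);
  scalDl : forall r s a, scal (r + s) a = add (scal r a) (scal s a);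
  scalA : forall r s a, scal (r * s) a = scal r (scal s a);
  scal1 : forall a, scal 1 a = a;
  scalMl : forall r a b, scal r (mul a b) = mul (scal r a) b;
  le_refl : forall a, le a a;
  le_anti : forall a b, le a b -> le b a -> a = b;
  le_trans : forall a b c, le a b -> le b c -> le a c;
  join_l : forall a b, le a (join a b);
  join_r : forall a b, le b (join a b);
  join_lub : forall a b c, le a c -> le b c -> le (join a b) c;
  meet_l : forall a b, le (meet a b) a;
  meet_r : forall a b, le (meet a b) b;
  meet_glb : forall a b c, le c a -> le c b -> le c (meet a b);
  le_add : forall a b c, le a b -> le (add a c) (add b c);
  mul_ge0 : forall a b, le zero a -> le zero b -> le zero (mul a b);
  scal_ge0 : forall r a, 0 <= r -> le zero a -> le zero (scal r a)
}.

Arguments zero {l}. Arguments one {l}. Arguments add {l}. Arguments opp {l}.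
Arguments mul {l}. Arguments scal {l}. Arguments le {l}. Arguments join {l}.
Arguments meet {l}.

Definition bounded (A : lalg) : Prop :=
  forall a : A, exists n : nat, le a (scal (INR n) one).

Definition archimedean (A : lalg) : Prop :=
  forall a b : A, (forall n : nat, le (scal (INR n) a) b) -> le a zero.

Definition bal (A : lalg) : Prop := bounded A /\ archimedean A.

Definition lnorm (A : lalg) (a : A) : R :=
  real (Glb_Rbar (fun r => le (join a (opp a)) (scal r one))).

Definition is_bal_hom (A B : lalg) (g : A -> B) : Prop :=
  (forall a b, g (add a b) = add (g a) (g b)) /\
  (forall a b, g (mul a b) = mul (g a) (g b)) /\
  (forall r a, g (scal r a) = scal r (g a)) /\
  g one = one /\
  (forall a b, g (join a b) = join (g a) (g b)) /\
  (forall a b, g (meet a b) = meet (g a) (g b)).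

Definition weighted (X : Type) (w : X -> R) : Prop := forall x, 0 <= w x.

Definition wset_mor (X : Type) (w : X -> R) (A : lalg) (h : X -> A) : Prop :=
  forall x, lnorm A (h x) <= w x.

Definition is_free_bal (X : Type) (w : X -> R) (F : lalg) (f : X -> F) : Prop :=
  bal F /\ wset_mor X w F f /\
  forall (A : lalg), bal A -> forall h : X -> A, wset_mor X w A h ->
    exists alpha : F -> A,
      (is_bal_hom F A alpha /\ forall x, alpha (f x) = h x) /\
      forall beta : F -> A, is_bal_hom F A beta -> (forall x, beta (f x) = h x) ->
        forall y, beta y = alpha y.

(* Main.v *)
From Stdlib Require Import Reals Lra Lia ZArith.
From Coquelicot Require Import Coquelicot.
Require Import Defs.
Open Scope R_scope.

Lemma glb_ge (E : R -> Prop) c r0 : E r0 -> (forall r, E r -> c <= r) ->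
  c <= real (Glb_Rbar E).
Proof.
  intros H0 Hl. destruct (Glb_Rbar_correct E) as [H1 H2].
  assert (A : Rbar_le (Finite c) (Glb_Rbar E)) by (apply H2; intros x Hx; simpl; auto).
  specialize (H1 r0 H0).
  destruct (Glb_Rbar E); simpl in *; tauto.
Qed.

Lemma glb_eq (E : R -> Prop) c : (forall r, E r <-> c <= r) -> real (Glb_Rbar E) = c.
Proof.
  intros H. rewrite (is_glb_Rbar_unique E (Finite c)); [reflexivity|].
  split.
  - intros x Hx; simpl; apply H; auto.
  - intros b Hb. apply Hb, H. lra.
Qed.

Definition Ralg : lalg.
Proof.
  apply (LAlg R 0 1 Rplus Ropp Rmult Rmult Rle Rmax Rmin); intros; try ring.
  all: try lra.
  - apply Rmax_l. - apply Rmax_r. - apply Rmax_lub; auto.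
  - apply Rmin_l. - apply Rmin_r. - apply Rmin_glb; auto.
  - apply Rmult_le_pos; auto. - apply Rmult_le_pos; auto.
Defined.

Lemma Ralg_bal : bal Ralg.
Proof.
  split.
  - intros a. simpl in a. destruct (archimed a) as [H1 _].
    exists (Z.to_nat (up a)). simpl.
    destruct (Z_lt_le_dec (up a) 0) as [Hn|Hp].
    + replace (Z.to_nat (up a)) with 0%nat by lia. apply IZR_lt in Hn. simpl. lra.
    + rewrite INR_IZR_INZ, Z2Nat.id by lia. lra.
  - intros a b H. simpl in *. destruct (Rle_dec a 0) as [|Ha]; auto.
    exfalso. assert (Ha' : 0 < a) by lra.
    destruct (archimed (b / a)) as [H1 _].
    destruct (Z_lt_le_dec (up (b/a)) 0) as [Hn|Hp].
    + specialize (H 0%nat). simpl in H. apply IZR_lt in Hn.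
      assert (b / a < 0) by lra. assert (b < 0).
      { replace b with ((b/a)*a) by (field; lra). nra. } lra.
    + specialize (H (Z.to_nat (up (b/a)))).
      rewrite INR_IZR_INZ, Z2Nat.id in H by lia.
      assert (b/a * a = b) by (field; lra). nra.
Qed.

Lemma hom_mono (A B : lalg) (g : A -> B) : is_bal_hom A B g ->
  forall a b, le a b -> le (g a) (g b).
Proof.
  intros (_&_&_&_&Hj&_) a b H.
  assert (E : join a b = b) by (apply le_anti; [apply join_lub; [auto|apply le_refl]|apply join_r]).
  rewrite <- E, Hj. apply join_l.
Qed.

Lemma hom_opp (A : lalg) (g : A -> Ralg) : is_bal_hom A Ralg g ->
  forall a, g (Defs.opp a) = - g a.
Proof.
  intros (Ha&_) a.
  assert (Z : g zero = 0).
  { assert (H := Ha zero zero). rewrite add0 in H. simpl in H. lra. }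
  assert (H := Ha (opp a) a). rewrite addN, Z in H. simpl in H. lra.
Qed.

Theorem mainTheorem7 (X : Type) (w : X -> R) (hw : weighted X w)
  (F : lalg) (f : X -> F) (hF : is_free_bal X w F f) :
  forall x : X, lnorm F (f x) = w x.
Proof.
  intros x. destruct hF as [[Hb _] [Hm Hu]].
  assert (Hw : wset_mor X w Ralg w).
  { intros y. unfold lnorm. rewrite (glb_eq _ (w y)); [lra|].
    intros r. simpl. specialize (hw y). unfold Rmax.
    destruct (Rle_dec (w y) (- w y)); split; intros; lra. }
  destruct (Hu Ralg Ralg_bal w Hw) as [alpha [[Hh Hx] _]].
  apply Rle_antisym; [apply Hm|].
  destruct (Hb (Defs.join (f x) (Defs.opp (f x)))) as [n Hn].
  unfold lnorm. apply (glb_ge _ _ (INR n) Hn).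
  intros r Hr. apply (hom_mono _ _ _ Hh) in Hr.
  destruct Hh as (H1&H2&H3&H4&H5&H6).
  rewrite H5, H3, H4, (hom_opp _ _ (conj H1 (conj H2 (conj H3 (conj H4 (conj H5 H6)))))), Hx in Hr.
  simpl in Hr. specialize (hw x).
  pose proof (Rmax_l (w x) (- w x)). lra.
Qed.
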